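(* Let $F$ be a Boolean formula over $n$ variables and let $1\le m\le n$. If $|\mathrm{Sol}(F)| \le 2^{m-2}$, then $\varphi_{stock}^F(m)$ is true.
   Context: $\mathrm{Sol}(F)\subseteq\{0,1\}^n$ denotes the set of satisfying assignments of $F$. For $n,m,k\ge 1$, $\mathcal{H}(n,m,k)$ denotes a fixed explicit $k$-wise independent family of hash functions $\{0,1\}^n\to\{0,1\}^m$: for $h$ drawn uniformly from $\mathcal{H}(n,m,k)$, all distinct $y_1,\dots,y_k\in\{0,1\}^n$ and all $\alpha_1,\dots,\alpha_k\in\{0,1\}^m$, $\Pr[h(y_1)=\alpha_1\wedge\cdots\wedge h(y_k)=\alpha_k]=2^{-mk}$. The statement $\varphi_{stock}^F(m)$ means: there exist $h_1,\dots,h_m\in\mathcal{H}(n,m,2)$ such that for every $z_1\in\mathrm{Sol}(F)$ there is an index $i\in\{1,\dots,m\}$ such that no $z_2\in\mathrm{Sol}(F)$ with $z_2\neq z_1$ satisfies $h_i(z_2)=h_i(z_1)$. *)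

(* Defs.v *)
From mathcomp Require Import all_boot.
Set Implicit Arguments. Unset Strict Implicit. Unset Printing Implicit Defensive.

Notation bits n := (n.-tuple bool).

Inductive formula (n : nat) : Type :=
| FVar of 'I_n
| FTrue
| FFalse
| FNeg of formula n
| FAnd of formula n & formula n
| FOr of formula n & formula n.

Fixpoint feval (n : nat) (F : formula n) (x : bits n) : bool :=
  match F with
  | FVar i => tnth x i
  | FTrue => true
  | FFalse => false
  | FNeg G => ~~ feval G x
  | FAnd G H => feval G x && feval H x
  | FOr G H => feval G x || feval H x
  end.

Definition Sol (n : nat) (F : formula n) : {set bits n} := [set x | feval F x].

Definition hashfun (n m : nat) := {ffun bits n -> bits m}.

(* A family of hash functions is a (nonempty) finite list, drawn uniformly
   (multiplicities allowed).  It is k-wise independent if for all distinct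
   y_1..y_k and all alpha_1..alpha_k,
   Pr_h[h(y_1)=alpha_1 /\ ... /\ h(y_k)=alpha_k] = 2^{-mk},
   i.e. #{h in H | ...} * 2^(m*k) = |H|. *)
Definition kwise_independent (n m k : nat) (H : seq (hashfun n m)) : Prop :=
  0 < size H /\
  forall (ys : k.-tuple (bits n)), uniq ys ->
  forall (alphas : k.-tuple (bits m)),
    count (fun h : hashfun n m => [forall i : 'I_k, h (tnth ys i) == tnth alphas i]) H
      * 2 ^ (m * k) = size H.

Definition phi_stock (n m : nat) (H : seq (hashfun n m)) (F : formula n) : Prop :=
  exists hs : m.-tuple (hashfun n m),
    all (fun h => h \in H) hs /\
    forall z1, z1 \in Sol F ->
      exists i : 'I_m,
        forall z2, z2 \in Sol F -> z2 != z1 -> tnth hs i z2 != tnth hs i z1.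

(* Main.v *)
Require Import Defs.
From mathcomp Require Import all_boot.
Set Implicit Arguments. Unset Strict Implicit. Unset Printing Implicit Defensive.

Lemma count_sum (T : Type) (p : pred T) (s : seq T) :
  count p s = \sum_(x <- s) p x.
Proof. by elim: s => [|a s IH]; rewrite ?big_nil ?big_cons //= IH. Qed.

Lemma coll_count n m (H : seq (hashfun n m)) (z z2 : bits n) :
  kwise_independent 2 H -> z2 != z ->
  count (fun h : hashfun n m => h z2 == h z) H * 2 ^ m = size H.
Proof.
move=> [_ KW] neq.
have Hal : forall a : bits m,
  count (fun h : hashfun n m => (h z2 == a) && (h z == a)) H * 2 ^ (m * 2) = size H.
  move=> a.
  have U : uniq [tuple z2; z] by rewrite /= inE neq.
  rewrite -(KW _ U [tuple a; a]); congr (_ * _); apply: eq_count => h.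
  apply/andP/forallP => [[e1 e2] i|A].
    by case: i => [[|[|]]] //= ?; rewrite /tnth /=.
  by split; [have := A ord0 | have := A ord_max]; rewrite /tnth /=.
have E : count (fun h : hashfun n m => h z2 == h z) H =
   \sum_(a : bits m) count (fun h : hashfun n m => (h z2 == a) && (h z == a)) H.
  rewrite count_sum (eq_bigr (fun a : bits m => \sum_(h <- H) ((h z2 == a) && (h z == a)))); last by move=> a _; rewrite count_sum.
  rewrite exchange_big /=; apply: eq_bigr => h _.
  rewrite (bigD1 (h z)) //= eqxx andbT big1 ?addn0 // => a /negbTE na.
  by rewrite [h z == a]eq_sym na andbF.
have : count (fun h : hashfun n m => h z2 == h z) H * 2 ^ m * 2 ^ m = size H * 2 ^ m.
  rewrite E -mulnA -expnD addnn -muln2 big_distrl /=.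
  under eq_bigr => a _ do rewrite Hal.
  by rewrite sum_nat_const card_tuple card_bool mulnC.
move/eqP; rewrite eqn_pmul2r ?expn_gt0 //; by move/eqP.
Qed.

Definition bad n m (S : {set bits n}) (h : hashfun n m) (z : bits n) :=
  [exists z2, (z2 \in S) && (z2 != z) && (h z2 == h z)].

Lemma bad_count n m (H : seq (hashfun n m)) (S : {set bits n}) z :
  kwise_independent 2 H ->
  count (fun h => bad S h z) H * 2 ^ m <= #|S| * size H.
Proof.
move=> KW.
have L1 : count (fun h => bad S h z) H <=
   \sum_(z2 | (z2 \in S) && (z2 != z)) count (fun h : hashfun n m => h z2 == h z) H.
  rewrite count_sum (eq_bigr (fun z2 => \sum_(h <- H) (h z2 == h z))); last first.
    by move=> z2 _; rewrite count_sum.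
  rewrite (exchange_big_dep xpredT) //=; apply: leq_sum => h _.
  case: (boolP (bad S h z)) => // /existsP [z2 /andP [P e]].
  rewrite (bigD1 z2) /=; last by rewrite andbT. by rewrite e leq_addr.
apply: (leq_trans (leq_mul L1 (leqnn _))).
rewrite big_distrl /=.
rewrite (eq_bigr (fun _ => size H)); last first.
  by move=> z2 /andP [_ ne]; apply: coll_count.
rewrite sum_nat_const leq_mul2r; apply/orP; right.
by apply: subset_leq_card; apply/subsetP => x; rewrite ?inE => /andP [].
Qed.

Lemma exists_min (T : eqType) (H : seq T) (f : T -> nat) :
  0 < size H -> exists2 h, h \in H & forall h', h' \in H -> f h <= f h'.
Proof.
elim: H => [|a l IH] // _.
case: l IH => [|b l] IH.
  by exists a => [|h']; rewrite ?inE // => /eqP ->.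
have [h hl hm] := IH isT.
case: (leqP (f a) (f h)) => [le|lt].
  exists a; first by rewrite inE eqxx.
  move=> h'; rewrite inE => /orP [/eqP -> //|/hm]; exact: leq_trans.
exists h; first by rewrite inE hl orbT.
move=> h'; rewrite inE => /orP [/eqP ->|/hm //]; exact: ltnW.
Qed.

Lemma step n m (H : seq (hashfun n m)) (S R : {set bits n}) :
  kwise_independent 2 H -> #|S| * 4 <= 2 ^ m ->
  exists2 h, h \in H & #|[set z in R | bad S h z]| * 4 <= #|R|.
Proof.
move=> KW hS.
have Hpos := proj1 KW.
pose f (h : hashfun n m) := #|[set z in R | bad S h z]|.
have [h hH hm] := exists_min f Hpos.
exists h => //.
have A : f h * size H <= \sum_(z in R) count (fun h => bad S h z) H.
  have -> : \sum_(z in R) count (fun h => bad S h z) H = \sum_(h' <- H) f h'.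
    rewrite (eq_bigr (fun z => \sum_(h' <- H) bad S h' z)); last first.
      by move=> z _; rewrite count_sum.
    rewrite exchange_big /=; apply: eq_bigr => h' _.
    rewrite /f -sum1_card (eq_bigl (fun z => (z \in R) && bad S h' z)); last first.
      by move=> z; rewrite inE.
    by rewrite big_mkcondr /=; apply: eq_bigr => z _; case: (bad S h' z).
  apply: leq_trans (_ : \sum_(h' <- H) f h <= _).
    rewrite big_const_seq count_predT iter_addn_0. by [].
  by rewrite big_seq_cond [X in _ <= X]big_seq_cond; apply: leq_sum => h' /andP [/hm].
have B : f h * size H * 2 ^ m <= #|R| * #|S| * size H.
  apply: leq_trans (leq_mul A (leqnn _)) _.
  rewrite big_distrl /=.
  apply: leq_trans (_ : \sum_(z in R) (#|S| * size H) <= _).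
    by apply: leq_sum => z _; apply: bad_count.
  by rewrite sum_nat_const mulnA.
have C : f h * 2 ^ m <= #|R| * #|S|.
  by rewrite -(leq_pmul2r Hpos) mulnAC.
have p2 : 0 < 2 ^ m by rewrite expn_gt0.
rewrite -(leq_pmul2r p2) mulnAC.
apply: leq_trans (leq_mul C (leqnn 4)) _.
by rewrite -mulnA leq_mul2l hS orbT.
Qed.

Lemma iterate n m (H : seq (hashfun n m)) (S : {set bits n}) :
  kwise_independent 2 H -> #|S| * 4 <= 2 ^ m ->
  forall k, exists hs : seq (hashfun n m),
    [/\ size hs = k, all (fun h => h \in H) hs &
      exists R : {set bits n}, #|R| * 2 ^ k <= #|S| /\
        forall z, z \in S -> z \notin R -> exists2 h, h \in hs & ~~ bad S h z].
Proof.
move=> KW hS; elim=> [|k [hs [sz al [R [cR iso]]]]].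
  exists [::]; split => //; exists S; split; first by rewrite muln1.
  by move=> z ->.
have [h hH c4] := step R KW hS.
exists (h :: hs); split => //=; first by rewrite sz.
  by rewrite hH al.
exists [set z in R | bad S h z]; split.
  rewrite expnS mulnA; apply: leq_trans cR; rewrite leq_mul2r; apply/orP; right.
  apply: leq_trans c4; rewrite leq_mul2l; apply/orP; right => //.
move=> z zS; rewrite inE negb_and => /orP [zR|nb].
  by have [h' h'in b] := iso z zS zR; exists h' => //; rewrite inE h'in orbT.
by exists h => //; rewrite inE eqxx.
Qed.

Theorem lemma3p2 (n m : nat) (H : seq (hashfun n m)) (F : formula n) :
  kwise_independent 2 H ->
  1 <= m -> m <= n ->
  (* |Sol(F)| <= 2^(m-2), stated without truncated subtraction *)
  #|Sol F| * 4 <= 2 ^ m ->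
  phi_stock H F.
Proof.
move=> KW _ _ hS.
have [hs [sz al [R [cR iso]]]] := iterate KW hS m.
have R0 : R = set0.
  apply/eqP; rewrite -cards_eq0; apply/eqP.
  case: #|R| cR => // r cR; exfalso.
  have p2 : 0 < 2 ^ m by rewrite expn_gt0.
  have : 2 ^ m * 4 <= 2 ^ m.
    apply: leq_trans hS; rewrite leq_mul2r /=.
    by apply: leq_trans cR; rewrite leq_pmull.
  by rewrite leqNgt ltn_Pmulr.
have szE : size hs == m by rewrite sz.
exists (Tuple szE); split => //.
move=> z zS; have [h hin nb] : exists2 h, h \in hs & ~~ bad (Sol F) h z by apply: iso => //; rewrite R0 inE.
have /tnthP [i ei] : h \in Tuple szE by [].
exists i => z2 z2S ne; rewrite -ei; apply/negP => e.
by move/existsP: nb; apply; exists z2; rewrite z2S ne e.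
Qed.
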